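(* Let $p,q>0$ and $\alpha,\beta,\nu,\gamma\in\mathbb{R}$ with $\nu\ln p\neq\alpha\ln q$ (equivalently $p^\nu\neq q^\alpha$). Define for $n\in\mathbb{N}$ $$f(n)=q^{\beta}\left(\frac{p^{n\nu}-q^{n\alpha}}{p^{\nu}-q^{\alpha}}+2\gamma\,\frac{p^{n\nu}-(-1)^{n}q^{n\alpha}}{p^{\nu}+q^{\alpha}}\right).$$ Then $f(n)>0$ for all integers $n\geq 1$ provided that $-2\gamma<1$ in the case $\nu\ln p>\alpha\ln q$, and $-1<2\gamma<-\dfrac{p^{\nu}+q^{\alpha}}{p^{\nu}-q^{\alpha}}$ in the case $\nu\ln p<\alpha\ln q$.
   Context: $f$ is the structure function of the $(p,q;\alpha,\beta,\nu;\gamma)$-deformed oscillator algebra (defined by $aa^{\dagger}-p^{\nu}a^{\dagger}a=(1+2\gamma K)q^{\alpha N+\beta}$, $[N,a]=-a$, $[N,a^\dagger]=a^\dagger$, $Ka=-aK$, $Ka^\dagger=-a^\dagger K$, $[N,K]=0$) in the case $p^\nu\neq q^\alpha$; note $f(0)=0$. *)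

(* Defs.v *)
From Stdlib Require Import Reals.
Open Scope R_scope.

Definition structf (p q alpha beta nu gamma : R) (n : nat) : R :=
  Rpower q beta *
  ( (Rpower p (INR n * nu) - Rpower q (INR n * alpha))
      / (Rpower p nu - Rpower q alpha)
  + 2 * gamma * (Rpower p (INR n * nu) - (-1) ^ n * Rpower q (INR n * alpha))
      / (Rpower p nu + Rpower q alpha) ).

(* Main.v *)
Require Import Defs.
From Stdlib Require Import Reals.
From Stdlib Require Import Lra Psatz Arith.
Open Scope R_scope.

Lemma pow_lt_S (x y : R) (m : nat) : 0 <= x < y -> x ^ S m < y ^ S m.
Proof.
  intros [H1 H2]. simpl.
  assert (A := pow_incr x y m (conj H1 (Rlt_le _ _ H2))).
  assert (B : 0 < y ^ m) by (apply pow_lt; lra).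
  nra.
Qed.

Lemma sign_S (a b : R) (m : nat) : 0 < a -> 0 < b -> a <> b ->
  0 < (a ^ S m - b ^ S m) * (a - b).
Proof.
  intros Ha Hb Hab. destruct (Rtotal_order a b) as [H|[H|H]].
  - assert (C := pow_lt_S a b m (conj (Rlt_le _ _ Ha) H)). nra.
  - contradiction.
  - assert (C := pow_lt_S b a m (conj (Rlt_le _ _ Hb) H)). nra.
Qed.

Lemma sign_w (a b : R) (m : nat) : 0 < a -> 0 < b ->
  0 <= (a ^ m - b ^ m) * (a - b).
Proof.
  intros Ha Hb. destruct (Rle_lt_dec a b) as [H|H].
  - assert (C := pow_incr a b m (conj (Rlt_le _ _ Ha) H)). nra.
  - assert (C := pow_incr b a m (conj (Rlt_le _ _ Hb) (Rlt_le _ _ H))). nra.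
Qed.

Lemma main (a b c : R) (n : nat) : 0 < a -> 0 < b -> a <> b ->
  (b < a -> - c < 1) ->
  (a < b -> -1 < c /\ c < - ((a + b) / (a - b))) ->
  (1 <= n)%nat ->
  0 < (a ^ n - b ^ n) / (a - b) + c * (a ^ n - (-1) ^ n * b ^ n) / (a + b).
Proof.
  intros Ha Hb Hab H1 H2 Hn.
  assert (Dab : a - b <> 0) by lra.
  assert (Eab : a + b <> 0) by lra.
  assert (Rc : c * (a ^ n - (-1) ^ n * b ^ n) / (a + b)
               = c * ((a ^ n - (-1) ^ n * b ^ n) / (a + b))) by (field; lra).
  rewrite Rc; clear Rc.
  destruct (Nat.Even_or_Odd n) as [[k Hk]|[k Hk]]; subst n.
  - rewrite pow_1_even, Rmult_1_l.
    destruct k as [|k]; [simpl in Hn; lia|].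
    assert (Hs := sign_S a b (2 * S k - 1) Ha Hb Hab).
    replace (S (2 * S k - 1)) with (2 * S k)%nat in Hs by lia.
    set (u := a ^ (2 * S k)) in *. set (v := b ^ (2 * S k)) in *.
    assert (HS : 0 < (u - v) / (a - b)).
    { replace ((u - v) / (a - b)) with ((u - v) * (a - b) / ((a - b) * (a - b))) by (field; lra).
      apply Rdiv_lt_0_compat; nra. }
    destruct (Rtotal_order a b) as [H|[H|H]]; [|contradiction|].
    + destruct (H2 H) as [_ Hc].
      assert (Hid : (u - v) / (a - b) + - ((a + b) / (a - b)) * ((u - v) / (a + b)) = 0)
        by (field; lra).
      assert (HT : (u - v) / (a + b) < 0).
      { apply Rdiv_neg_pos; [|lra].
        assert (0 < (u - v) * (a - b)) by lra. nra. }
      nra.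
    + assert (Hc := H1 H).
      assert (HT : 0 < (u - v) / (a + b)).
      { apply Rdiv_lt_0_compat; [|lra]. nra. }
      assert (HST : 0 <= (u - v) / (a - b) - (u - v) / (a + b)).
      { replace ((u - v) / (a - b) - (u - v) / (a + b))
          with (2 * b * ((u - v) * (a - b)) / ((a - b) * (a - b) * (a + b))) by (field; lra).
        apply Rmult_le_pos; [|apply Rlt_le, Rinv_0_lt_compat].
        - nra.
        - assert (0 < (a - b) * (a - b)) by (apply Rsqr_pos_lt; lra). nra. }
      nra.
  - replace (2 * k + 1)%nat with (S (2 * k)) by lia. rewrite pow_1_odd.
    change (a ^ S (2 * k)) with (a * a ^ (2 * k)). change (b ^ S (2 * k)) with (b * b ^ (2 * k)).
    assert (Hw := sign_w a b (2 * k) Ha Hb).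
    set (u := a ^ (2 * k)) in *. set (v := b ^ (2 * k)) in *.
    assert (Hu : 0 < u) by (apply pow_lt; lra).
    assert (Hv : 0 < v) by (apply pow_lt; lra).
    assert (Hc : -1 < c).
    { destruct (Rtotal_order a b) as [H|[H|H]]; [apply H2; auto|contradiction|].
      assert (H' := H1 H). lra. }
    assert (HT : 0 < (a * u - -1 * (b * v)) / (a + b)).
    { apply Rdiv_lt_0_compat; nra. }
    assert (HST : 0 <= (a * u - b * v) / (a - b) - (a * u - -1 * (b * v)) / (a + b)).
    { replace ((a * u - b * v) / (a - b) - (a * u - -1 * (b * v)) / (a + b))
        with (2 * a * b * ((u - v) * (a - b)) / ((a - b) * (a - b) * (a + b))) by (field; lra).
      apply Rmult_le_pos; [|apply Rlt_le, Rinv_0_lt_compat].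
      - assert (0 < a * b) by nra. nra.
      - assert (0 < (a - b) * (a - b)) by (apply Rsqr_pos_lt; lra). nra. }
    nra.
Qed.

Theorem proposition2 (p q alpha beta nu gamma : R) :
  0 < p -> 0 < q ->
  nu * ln p <> alpha * ln q ->
  (alpha * ln q < nu * ln p -> - (2 * gamma) < 1) ->
  (nu * ln p < alpha * ln q ->
     -1 < 2 * gamma /\
     2 * gamma < - ((Rpower p nu + Rpower q alpha) / (Rpower p nu - Rpower q alpha))) ->
  forall n : nat, (1 <= n)%nat -> 0 < structf p q alpha beta nu gamma n.
Proof.
  intros Hp Hq Hne H1 H2 n Hn. unfold structf.
  assert (Ha : 0 < Rpower p nu) by apply exp_pos.
  assert (Hb : 0 < Rpower q alpha) by apply exp_pos.
  assert (E1 : forall x y, 0 < x -> Rpower x (INR n * y) = (Rpower x y) ^ n).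
  { intros x y Hx. rewrite Rmult_comm, <- Rpower_mult. apply Rpower_pow. apply exp_pos. }
  rewrite (E1 p nu Hp), (E1 q alpha Hq).
  apply Rmult_lt_0_compat; [apply exp_pos|].
  apply main; auto.
  - unfold Rpower. intro E. apply exp_inv in E. lra.
  - intro H. apply H1. unfold Rpower in H. apply exp_lt_inv in H. lra.
  - intro H. apply H2. unfold Rpower in H. apply exp_lt_inv in H. lra.
Qed.
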